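(* If $X$ is a metric space, then $e(X\ast I)=e(X)$.
   Context: Let $I=\mathbb R_{\ge0}\times\mathbb R_{\ge0}$ with the Manhattan metric $d((s_1,t_1),(s_2,t_2))=|s_1-s_2|+|t_1-t_2|$. For a metric space $X$ with base point $x_0$, the asymptotic product is $X\ast I=\{(x,i)\in X\times I: d(x,x_0)=d(i,(0,0))\}$ with the metric $d((x,i),(y,j))=d(x,y)+d(i,j)$. A subset is bounded if it has finite diameter. Finitely many pairwise disjoint subsets $U_1,\dots,U_n$ of a metric space $Z$ with union $Z$ form a coarse disjoint union of $Z$ if for every $R\ge0$ and every $i\ne j$ the set $\{z:d(z,U_i)\le R\}\cap\{z:d(z,U_j)\le R\}$ is bounded. The number of ends $e(Z)$ is $0$ if $Z$ is bounded and otherwise the supremum (possibly $\infty$) of those $n$ for which $Z$ is a coarse disjoint union of $n$ unbounded subsets. *)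

(* Defs.v *)
From HB Require Import structures.
From mathcomp Require Import all_boot all_order all_algebra.
From mathcomp Require Import all_classical all_reals all_analysis.
Set Implicit Arguments. Unset Strict Implicit. Unset Printing Implicit Defensive.
Import Order.TTheory GRing.Theory Num.Theory.
Local Open Scope classical_set_scope.
Local Open Scope ring_scope.

Definition is_metric (R : realType) (T : Type) (d : T -> T -> R) : Prop :=
  (forall x y, 0 <= d x y) /\ (forall x y, d x y = 0 <-> x = y) /\
  (forall x y, d x y = d y x) /\ (forall x y z, d x z <= d x y + d y z).

Definition bounded_set (R : realType) (T : Type) (d : T -> T -> R) (A : set T) : Prop :=
  exists M : R, forall x y, A x -> A y -> d x y <= M.

(* d(z, U) = inf_{u in U} d(z,u), with inf of the empty set = +oo *)
Definition dist_to (R : realType) (T : Type) (d : T -> T -> R) (z : T) (U : set T)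
  : \bar R := ereal_inf [set (d z u)%:E | u in U].

Definition nbhd (R : realType) (T : Type) (d : T -> T -> R) (U : set T) (r : R) : set T :=
  [set z | (dist_to d z U <= r%:E)%E].

Definition coarse_disjoint_union (R : realType) (T : Type) (d : T -> T -> R)
  (n : nat) (U : 'I_n -> set T) : Prop :=
  (forall i j, i != j -> U i `&` U j = set0) /\
  (\bigcup_(i in [set: 'I_n]) U i = [set: T]) /\
  (forall (r : R) i j, 0 <= r -> i != j ->
     bounded_set d (nbhd d (U i) r `&` nbhd d (U j) r)).

Definition ends (R : realType) (T : Type) (d : T -> T -> R) : \bar R :=
  if pselect (bounded_set d [set: T]) then 0%E
  else ereal_sup [set (n%:R)%:E | n in
         [set n : nat | exists U : 'I_n -> set T,
            coarse_disjoint_union d U /\ forall i, ~ bounded_set d (U i)]].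

(* I = R>=0 x R>=0 with the Manhattan metric *)
Definition Ipt (R : realType) := {p : R * R | 0 <= p.1 /\ 0 <= p.2}.
Definition I_dist (R : realType) (i j : Ipt R) : R :=
  `|(proj1_sig i).1 - (proj1_sig j).1| + `|(proj1_sig i).2 - (proj1_sig j).2|.
Definition I_origin (R : realType) : Ipt R :=
  exist _ (0, 0) (conj (lexx (0:R)) (lexx (0:R))).

Definition asym_prod (R : realType) (T : Type) (d : T -> T -> R) (x0 : T) :=
  {p : T * Ipt R | d p.1 x0 = I_dist p.2 (I_origin R)}.

Definition asym_dist (R : realType) (T : Type) (d : T -> T -> R) (x0 : T)
  (p q : asym_prod d x0) : R :=
  d (proj1_sig p).1 (proj1_sig q).1 + I_dist (proj1_sig p).2 (proj1_sig q).2.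

(* Main.v *)
Require Import Defs.
From HB Require Import structures.
From mathcomp Require Import all_boot all_order all_algebra.
From mathcomp Require Import all_classical all_reals all_analysis.
From mathcomp Require Import lra ring.
Import Defs.
Set Implicit Arguments. Unset Strict Implicit. Unset Printing Implicit Defensive.
Import Order.TTheory GRing.Theory Num.Theory.
Local Open Scope classical_set_scope.
Local Open Scope ring_scope.

Lemma nbhd_in (R : realType) (T : Type) (d : T -> T -> R) (U : set T) z u r :
  U u -> d z u <= r -> nbhd d U r z.
Proof.
move=> Uu hr; rewrite /nbhd /dist_to /=.
apply: (@le_trans _ _ (d z u)%:E); last by rewrite lee_fin.
by apply: ereal_inf_lbound; exists u.
Qed.

Lemma nbhd_ex (R : realType) (T : Type) (d : T -> T -> R) (U : set T) r z :
  nbhd d U r z -> exists2 u, U u & d z u <= r + 1.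
Proof.
rewrite /nbhd /dist_to /= => h.
have : (ereal_inf [set (d z u)%:E | u in U] < (r+1)%:E)%E.
  by apply: le_lt_trans h _; rewrite lte_fin ltrDl.
case/ereal_inf_lt => _ [u Uu <-]; rewrite lte_fin => hu.
by exists u => //; apply: ltW.
Qed.

Definition bndp (R : realType) (T : Type) (d : T -> T -> R) (x0 : T) (A : set T) :=
  exists M, forall a, A a -> d a x0 <= M.

Lemma bounded_bndp (R : realType) (T : Type) (d : T -> T -> R) (x0 : T) (A : set T) :
  (forall x y, d x y = d y x) -> (forall x y z, d x z <= d x y + d y z) ->
  bounded_set d A <-> bndp d x0 A.
Proof.
move=> sym tri; split.
- case=> M hM; case: (pselect (exists a, A a)) => [[a0 Aa0]|na].
  + exists (M + d a0 x0) => a Aa; apply: le_trans (tri _ a0 _) _.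
    by rewrite lerD2r hM.
  + by exists 0 => a Aa; case: na; exists a.
- case=> M hM; exists (M + M) => x y Ax Ay.
  apply: le_trans (tri x x0 y) _; rewrite (sym x0 y); exact: lerD (hM _ Ax) (hM _ Ay).
Qed.

Lemma fin_bound (R : realType) n (P : 'I_n -> R -> Prop) :
  (forall j M M', M <= M' -> P j M -> P j M') -> (forall j, exists M, P j M) ->
  exists M, forall j, P j M.
Proof.
move=> mono h.
have [f hf] := boolp.choice h.
exists (\sum_j `|f j|) => j; apply: mono (hf j).
rewrite (bigD1 j) //=; apply: le_trans (ler_norm _) _.
by rewrite lerDl sumr_ge0.
Qed.

Lemma ends_congr (R : realType) T1 T2 (d1 : T1 -> T1 -> R) (d2 : T2 -> T2 -> R) :
  (bounded_set d1 setT <-> bounded_set d2 setT) ->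
  (forall n, (exists U : 'I_n -> set T1, coarse_disjoint_union d1 U /\ forall i, ~ bounded_set d1 (U i)) <->
             (exists U : 'I_n -> set T2, coarse_disjoint_union d2 U /\ forall i, ~ bounded_set d2 (U i))) ->
  ends d1 = ends d2.
Proof.
move=> hb hn; rewrite /ends.
case: pselect => b1; case: pselect => b2 //.
- by exfalso; apply: b2; apply/hb.
- by exfalso; apply: b1; apply/hb.
- congr ereal_sup; congr image; apply/funext => n; apply/propext; exact: hn.
Qed.

Lemma pullback_cdu (R : realType) TA TB (dA : TA -> TA -> R) (dB : TB -> TB -> R)
  (a0 : TA) (b0 : TB) (f : TA -> TB) (L : R) n (V : 'I_n -> set TB) :
  0 <= L ->
  (forall a a', dB (f a) (f a') <= L * dA a a') ->
  (forall M, exists N, forall a, dB (f a) b0 <= M -> dA a a0 <= N) ->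
  (forall x y, dB x y = dB y x) -> (forall x y z, dB x z <= dB x y + dB y z) ->
  (forall x y, dA x y = dA y x) -> (forall x y z, dA x z <= dA x y + dA y z) ->
  coarse_disjoint_union dB V -> coarse_disjoint_union dA (fun i => f @^-1` V i).
Proof.
move=> L0 Lip prop symB triB symA triA [disj [cov bnd]]; split; [|split].
- move=> i j ij; apply/seteqP; split=> // a [Ha Hb].
  have h := disj i j ij.
  have : (V i `&` V j) (f a) by split.
  by rewrite h.
- apply/seteqP; split=> // a _.
  have : (\bigcup_(i in [set: 'I_n]) V i) (f a) by rewrite cov.
  by case=> i _ Hi; exists i.
- move=> r i j r0 ij.
  have r1 : 0 <= L * (r + 1) by rewrite mulr_ge0 // addr_ge0.
  have /(bounded_bndp b0 _ symB triB) [M hM] := bnd _ i j r1 ij.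
  have [N hN] := prop M.
  apply/(bounded_bndp a0 _ symA triA); exists N => a [ha hb].
  have [u Vu hu] := nbhd_ex ha; have [v Vv hv] := nbhd_ex hb.
  apply: hN; apply: hM; split.
  + apply: (nbhd_in (u := f u) Vu); apply: le_trans (Lip _ _) _; exact: ler_wpM2l.
  + apply: (nbhd_in (u := f v) Vv); apply: le_trans (Lip _ _) _; exact: ler_wpM2l.
Qed.

Definition clamp (R : realType) (r u : R) : R :=
  if u <= 0 then 0 else if u <= r then u else r.

Lemma clamp_bnd (R : realType) (r u : R) : 0 <= r -> 0 <= clamp r u /\ 0 <= r - clamp r u.
Proof.
move=> r0; rewrite /clamp; case: (leP u 0) => h1; case: (leP u r) => h2; split; lra.
Qed.

Lemma clamp_id (R : realType) (r u : R) : 0 <= u -> u <= r -> clamp r u = u.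
Proof.
move=> h0 h1; rewrite /clamp; case: (leP u 0) => h2; last by rewrite h1.
lra.
Qed.

Lemma clamp_top (R : realType) (r u : R) : 0 <= r -> r <= u -> clamp r u = r.
Proof.
move=> h0 h1; rewrite /clamp; case: (leP u 0) => h2; first lra.
case: (leP u r) => h3; lra.
Qed.

Lemma clamp_lip (R : realType) (r u u' : R) : 0 <= r -> `|clamp r u - clamp r u'| <= `|u - u'|.
Proof.
move=> r0.
have h1 : u - u' <= `|u - u'| by apply: ler_norm.
have h2 : u' - u <= `|u - u'| by rewrite distrC; apply: ler_norm.
rewrite /clamp ler_norml.
case: (leP u 0) => a1; case: (leP u r) => a2; case: (leP u' 0) => a3;
  case: (leP u' r) => a4; apply/andP; split; lra.
Qed.

Lemma Ipt_mk (R : realType) (r c : R) (h : 0 <= c /\ 0 <= r - c) :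
  r = I_dist (exist (fun p : R * R => 0 <= p.1 /\ 0 <= p.2) (c, r - c) h) (I_origin R).
Proof.
case: h => h1 h2; rewrite /I_dist /= !subr0 !ger0_norm //; lra.
Qed.

Definition Qpt (R : realType) (T : Type) (d : T -> T -> R) (x0 : T)
  (hnn : forall y, 0 <= d y x0) (x : T) (u : R) : asym_prod d x0 :=
  exist _ (x, exist (fun p : R * R => 0 <= p.1 /\ 0 <= p.2)
              (clamp (d x x0) u, d x x0 - clamp (d x x0) u) (clamp_bnd u (hnn x)))
    (Ipt_mk (clamp_bnd u (hnn x))).

Lemma ap_ext (R : realType) (T : Type) (d : T -> T -> R) (x0 : T) (p q : asym_prod d x0) :
  (proj1_sig p).1 = (proj1_sig q).1 ->
  proj1_sig (proj1_sig p).2 = proj1_sig (proj1_sig q).2 -> p = q.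
Proof.
case: p => [[x [i hi]] hp]; case: q => [[y [j hj]] hq] /= exy eij.
subst y j; move: hp hq; have -> : hi = hj by apply: boolp.Prop_irrelevance.
move=> hp hq; by rewrite (boolp.Prop_irrelevance hp hq).
Qed.

Lemma I_dist_ge0 (R : realType) (i j : Ipt R) : 0 <= I_dist i j.
Proof. by rewrite /I_dist addr_ge0. Qed.

Lemma I_dist_sym (R : realType) (i j : Ipt R) : I_dist i j = I_dist j i.
Proof. by rewrite /I_dist distrC [X in _ + X]distrC. Qed.

Lemma I_dist_tri (R : realType) (i j k : Ipt R) : I_dist i k <= I_dist i j + I_dist j k.
Proof.
rewrite /I_dist.
have h1 := ler_distD (proj1_sig j).1 (proj1_sig i).1 (proj1_sig k).1.
have h2 := ler_distD (proj1_sig j).2 (proj1_sig i).2 (proj1_sig k).2.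
lra.
Qed.

Lemma asym_sym (R : realType) (T : Type) (d : T -> T -> R) (x0 : T) :
  is_metric d -> forall p q : asym_prod d x0, asym_dist p q = asym_dist q p.
Proof. by move=> [_ [_ [sym _]]] p q; rewrite /asym_dist sym I_dist_sym. Qed.

Lemma asym_tri (R : realType) (T : Type) (d : T -> T -> R) (x0 : T) :
  is_metric d -> forall p q s : asym_prod d x0, asym_dist p s <= asym_dist p q + asym_dist q s.
Proof.
move=> [_ [_ [_ tri]]] p q s; rewrite /asym_dist.
have := tri (proj1_sig p).1 (proj1_sig q).1 (proj1_sig s).1.
have := I_dist_tri (proj1_sig p).2 (proj1_sig q).2 (proj1_sig s).2.
lra.
Qed.

Definition base_pt (R : realType) (T : Type) (d : T -> T -> R) (x0 : T)
  (h : d x0 x0 = I_dist (I_origin R) (I_origin R)) : asym_prod d x0 :=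
  exist _ (x0, I_origin R) h.

Lemma base_h (R : realType) (T : Type) (d : T -> T -> R) (x0 : T) :
  is_metric d -> d x0 x0 = I_dist (I_origin R) (I_origin R).
Proof.
move=> [_ [h0 _]]; rewrite /I_dist /= subrr normr0 addr0.
by apply/h0.
Qed.

Lemma asym_norm (R : realType) (T : Type) (d : T -> T -> R) (x0 : T) h (p : asym_prod d x0) :
  asym_dist p (@base_pt R T d x0 h) = d (proj1_sig p).1 x0 + d (proj1_sig p).1 x0.
Proof.
by case: p => [[x i] /= hp]; rewrite /asym_dist /= -hp.
Qed.

Definition sec (R : realType) (T : Type) (d : T -> T -> R) (x0 : T)
  (hnn : forall y, 0 <= d y x0) (x : T) : asym_prod d x0 := Qpt hnn x (d x x0).

Lemma Qdist (R : realType) (T : Type) (d : T -> T -> R) (x0 : T) hnn x (u u' : R) :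
  is_metric d -> asym_dist (@Qpt R T d x0 hnn x u) (Qpt hnn x u') <= 2 * `|u - u'|.
Proof.
move=> [_ [h0 _]]; rewrite /asym_dist /I_dist /=.
have -> : d x x = 0 by apply/h0.
set r := d x x0; set c := clamp r u; set c' := clamp r u'.
have -> : r - c - (r - c') = - (c - c') by ring.
rewrite normrN add0r.
have := clamp_lip u u' (hnn x); rewrite -/r -/c -/c'; lra.
Qed.

Lemma sec_lip (R : realType) (T : Type) (d : T -> T -> R) (x0 : T) hnn (x y : T) :
  is_metric d -> asym_dist (@sec R T d x0 hnn x) (sec hnn y) <= 2 * d x y.
Proof.
move=> [_ [h0 [sym tri]]]; rewrite /asym_dist /I_dist /=.
rewrite !clamp_id // !subrr normr0 addr0.
have : `|d x x0 - d y x0| <= d x y.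
  rewrite ler_norml; have := tri x y x0; have := tri y x x0; rewrite (sym y x); move=> *.
  apply/andP; split; lra.
lra.
Qed.

Lemma sec_fst (R : realType) (T : Type) (d : T -> T -> R) (x0 : T) hnn (x : T) :
  (proj1_sig (@sec R T d x0 hnn x)).1 = x.
Proof. by []. Qed.

Lemma dir1 (R : realType) (T : Type) (d : T -> T -> R) (x0 : T) (hd : is_metric d) n :
  (exists U : 'I_n -> set T, coarse_disjoint_union d U /\ forall i, ~ bounded_set d (U i)) ->
  (exists U : 'I_n -> set (asym_prod d x0),
     coarse_disjoint_union (@asym_dist R T d x0) U /\
     forall i, ~ bounded_set (@asym_dist R T d x0) (U i)).
Proof.
have hd' := hd; case: hd' => [nn [h0 [sym tri]]].
have hnn : forall y, 0 <= d y x0 by move=> y; apply: nn.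
set b0 := base_pt (base_h x0 hd).
case=> U [cdu unb].
exists (fun i => (fun p : asym_prod d x0 => (proj1_sig p).1) @^-1` U i); split.
- apply: (@pullback_cdu R _ _ _ d b0 x0 (fun p : asym_prod d x0 => (proj1_sig p).1) 1 n U) => //.
  + move=> a a'; rewrite mul1r /asym_dist lerDl; exact: I_dist_ge0.
  + move=> M; exists (M + M) => a ha; rewrite asym_norm; lra.
  + exact: asym_sym.
  + exact: asym_tri.
- move=> i hb; apply: (unb i).
  have /(bounded_bndp b0 _ (asym_sym hd) (asym_tri hd)) [N hN] := hb.
  apply/(bounded_bndp x0 _ sym tri); exists N => x Ux.
  have := hN (sec hnn x); rewrite asym_norm sec_fst => /(_ Ux).
  have := hnn x; lra.
Qed.

Lemma dir2 (R : realType) (T : Type) (d : T -> T -> R) (x0 : T) (hd : is_metric d) n :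
  (exists U : 'I_n -> set (asym_prod d x0),
     coarse_disjoint_union (@asym_dist R T d x0) U /\
     forall i, ~ bounded_set (@asym_dist R T d x0) (U i)) ->
  (exists U : 'I_n -> set T, coarse_disjoint_union d U /\ forall i, ~ bounded_set d (U i)).
Proof.
have hd' := hd; case: hd' => [nn [h0 [sym tri]]].
have hnn : forall y, 0 <= d y x0 by move=> y; apply: nn.
set b0 := base_pt (base_h x0 hd).
have asy := @asym_sym R T d x0 hd; have atr := @asym_tri R T d x0 hd.
case=> V [cdu unb].
exists (fun i => sec hnn @^-1` V i); split.
- apply: (@pullback_cdu R _ _ d _ x0 b0 (sec hnn) 2 n V) => //.
  + move=> a a'; exact: sec_lip.
  + move=> M; exists M => a; rewrite asym_norm sec_fst; have := hnn a; lra.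
- move=> k hU; apply: (unb k).
  have [M0 hM0] := (bounded_bndp x0 _ sym tri).1 hU.
  case: cdu => [disj [cov bnd]].
  have [N hN] : exists N, forall j, j != k -> forall p,
      (nbhd (@asym_dist R T d x0) (V k) 1 `&` nbhd (@asym_dist R T d x0) (V j) 1) p ->
      asym_dist p b0 <= N.
    apply: (fin_bound (P := fun j N => j != k -> forall p,
      (nbhd (@asym_dist R T d x0) (V k) 1 `&` nbhd (@asym_dist R T d x0) (V j) 1) p ->
      asym_dist p b0 <= N)).
    + move=> j M M' hMM' h jk p hp; exact: le_trans (h jk p hp) hMM'.
    + move=> j; case: (eqVneq j k) => jk.
        by exists 0.
      have := bnd 1 k j ler01; rewrite eq_sym => /(_ jk).
      case/(bounded_bndp b0 _ asy atr) => N hN; by exists N => _.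
  apply/(bounded_bndp b0 _ asy atr).
  apply: boolp.contrapT => hne.
  pose M := `|N| + `|M0| + `|M0|.
  have [p [Vp hp]] : exists p, V k p /\ M < asym_dist p b0.
    apply: boolp.contrapT => hne2; apply: hne; exists M => p Vp.
    rewrite leNgt; apply/negP => hlt; apply: hne2; by exists p.
  move: hp Vp; rewrite asym_norm.
  case: p => [[x [[a b] [ha hb]]] hp] /= hM Vp.
  simpl in ha, hb; rewrite /M in hM.
  pose r := d x x0.
  have er : r = d x x0 by [].
  have rab : r = a + b by rewrite /r hp /I_dist /= !subr0 !ger0_norm.
  have walk : forall m : nat, V k (Qpt hnn x (a + m%:R / 2)).
    elim=> [|m IH].
      rewrite mul0r addr0.
      have -> : Qpt hnn x a = exist _ (x, exist _ (a, b) (conj ha hb)) hp => //.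
      apply: ap_ext => //=; rewrite -/r clamp_id //; last lra.
      congr pair; lra.
    have : (\bigcup_(i in [set: 'I_n]) V i) (Qpt hnn x (a + m.+1%:R / 2)) by rewrite cov.
    case=> j _ Vj; case: (eqVneq j k) => jk; first by rewrite -jk.
    exfalso.
    have hq : asym_dist (Qpt hnn x (a + m%:R / 2)) b0 <= N.
      apply: (hN j jk); split.
      - apply: (nbhd_in IH).
        have := Qdist hnn x (a + m%:R / 2) (a + m%:R / 2) hd.
        rewrite subrr normr0 mulr0 => hh; exact: le_trans hh ler01.
      - apply: (nbhd_in Vj); apply: le_trans (Qdist _ _ _ _ hd) _.
        have : `|a + m%:R / 2 - (a + m.+1%:R / 2)| <= 1 / 2.
          rewrite (mulrSr 1 m) ler_norml; apply/andP; split; lra.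
        lra.
    move: hq; rewrite asym_norm /=; have := normr_ge0 M0; have := normr_ge0 N; have := ler_norm N; lra.
  have hr0 : 0 <= r by apply: hnn.
  pose m := Num.Def.archi_bound (2 * r).
  have hm : 2 * r < m%:R by apply: archi_boundP; lra.
  have := walk m.
  have -> : Qpt hnn x (a + m%:R / 2) = sec hnn x.
    apply: ap_ext => //=; rewrite /sec /= -/r clamp_top //; last lra.
    by rewrite clamp_top.
  move/hM0; rewrite -/r; have := ler_norm M0; have := normr_ge0 N; lra.
Qed.

Theorem mainTheorem15 (R : realType) (T : Type) (d : T -> T -> R) (x0 : T) :
  is_metric d -> ends (@asym_dist R T d x0) = ends d.
Proof.
move=> hd; have hd' := hd; case: hd' => [nn [h0 [sym tri]]].
have hnn : forall y, 0 <= d y x0 by move=> y; apply: nn.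
set b0 := base_pt (base_h x0 hd).
have asy := @asym_sym R T d x0 hd; have atr := @asym_tri R T d x0 hd.
apply: ends_congr.
- rewrite (bounded_bndp b0 _ asy atr) (bounded_bndp x0 _ sym tri); split.
  + case=> M hM; exists M => x _; have := hM (sec hnn x) I.
    rewrite asym_norm sec_fst; have := hnn x; lra.
  + case=> M hM; exists (M + M) => p _; rewrite asym_norm.
    have := hM (proj1_sig p).1 I; lra.
- move=> n; split; [exact: dir2 | exact: dir1].
Qed.
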